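(* Let $V_{Horn}$ be the set of matrices $A\in\partial\mathcal{CP}_5\cap\mathcal{DNN}_5^\circ$ that are orthogonal to some matrix of the form $DHD$ with $D$ a positive diagonal matrix. Then $V_{Horn}$ is the image of $Z_{Horn}$ under the map $\varphi: W\to Sym_5$, $\varphi(X)=XX^{\mathsf T}$.
   Context: $Sym_5$ is the space of real symmetric $5\times 5$ matrices with inner product $\langle A,B\rangle=\operatorname{trace}(A^{\mathsf T}B)$. $\mathcal{CP}_5$ is the cone of matrices $BB^{\mathsf T}$ with $B$ a real $5\times k$ matrix with nonnegative entries; $\mathcal{DNN}_5$ is the cone of positive semidefinite $5\times 5$ matrices with nonnegative entries; $\partial$ and ${}^\circ$ denote boundary and interior in the Euclidean topology. $H$ is the Horn matrix \[H=\begin{pmatrix} 1 & -1 &1& 1& -1 \\ -1 & 1& -1 &1& 1\\ 1 & -1 & 1 & -1 & 1\\ 1 & 1& -1&1& -1\\ -1&1&1&-1&1\end{pmatrix}.\] $W$ is the set of (nonnegative) $5\times 5$ matrices of the form \[\begin{pmatrix} y_{11}& 0&0& y_{41}& y_{51} \\ y_{12} & y_{22}& 0 &0& y_{52}\\ y_{13 }& y_{23}& y_{33} & 0& 0\\ 0 & y_{24}& y_{34}&y_{44}& 0\\ 0&0&y_{35}&y_{45}& y_{55}\end{pmatrix}.\] $Z_{Horn}\subset W$ is the set of all matrices $DB$ where $D$ is a diagonal matrix with positive diagonal entries and \[B = \begin{pmatrix} 1& 0&0& y_4& y_5+1 \\ y_1+1 & 1& 0 &0& y_5\\ y_1 & y_2+1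 & 1 & 0& 0\\ 0 & y_2& y_3+1&1& 0\\ 0&0&y_3&y_4+1&1\end{pmatrix}\operatorname{diag}(z_1,\dots,z_5)\] with $y_1,\dots,y_5,z_1,\dots,z_5$ positive reals. *)

(* Defs.v *)
From HB Require Import structures.
From mathcomp Require Import all_boot all_order all_algebra.
From mathcomp Require Import reals.
Set Implicit Arguments. Unset Strict Implicit. Unset Printing Implicit Defensive.
Import Order.TTheory GRing.Theory Num.Theory.
Local Open Scope ring_scope.

Section Defs.
Variable R : realType.

Definition sym5 (A : 'M[R]_5) : Prop := A^T = A.

Definition frob (A B : 'M[R]_5) : R := \tr (A^T *m B).

Definition CP5 (A : 'M[R]_5) : Prop :=
  exists (k : nat) (B : 'M[R]_(5, k)),
    (forall i j, 0 <= B i j) /\ A = B *m B^T.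

Definition psd (A : 'M[R]_5) : Prop :=
  sym5 A /\ forall x : 'cV[R]_5, 0 <= (x^T *m A *m x) 0 0.

Definition DNN5 (A : 'M[R]_5) : Prop := psd A /\ forall i j, 0 <= A i j.

(* Euclidean topology on Sym_5, with the (equivalent) max-entry norm. *)
Definition close (e : R) (A B : 'M[R]_5) : Prop := forall i j, `|B i j - A i j| < e.

Definition sym_interior (S : 'M[R]_5 -> Prop) (A : 'M[R]_5) : Prop :=
  sym5 A /\ exists e : R, 0 < e /\ forall B, sym5 B -> close e A B -> S B.

Definition sym_closure (S : 'M[R]_5 -> Prop) (A : 'M[R]_5) : Prop :=
  sym5 A /\ forall e : R, 0 < e -> exists B, sym5 B /\ S B /\ close e A B.

Definition sym_boundary (S : 'M[R]_5 -> Prop) (A : 'M[R]_5) : Prop :=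
  sym_closure S A /\ ~ sym_interior S A.

Definition Horn : 'M[R]_5 :=
  \matrix_(i < 5, j < 5)
    (if ((j + 5 - i) %% 5 == 1)%N || ((j + 5 - i) %% 5 == 4)%N then -1 else 1).

Definition posvec (d : 'rV[R]_5) : Prop := forall i, 0 < d 0 i.

Definition V_Horn (A : 'M[R]_5) : Prop :=
  sym_boundary CP5 A /\ sym_interior DNN5 A /\
  exists d : 'rV[R]_5, posvec d /\ frob A (diag_mx d *m Horn *m diag_mx d) = 0.

(* The set W: nonnegative matrices with the zero pattern of the paper
   (0-based indices: entry (i,j) may be nonzero only if (i - j) mod 5 <= 2). *)
Definition W (X : 'M[R]_5) : Prop :=
  (forall i j, 0 <= X i j) /\
  (forall i j : 'I_5, (2 < (i + 5 - j) %% 5)%N -> X i j = 0).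

(* The matrix with the pattern of the paper (before right-multiplying by
   diag z), y = (y_1,...,y_5) stored as y 0 0, ..., y 0 4:
   column j has 1 at row j, y_j + 1 at row j+1 (mod 5), y_j at row j+2 (mod 5). *)
Definition HornPattern (y : 'rV[R]_5) : 'M[R]_5 :=
  \matrix_(i < 5, j < 5)
    (if ((i + 5 - j) %% 5 == 0)%N then 1
     else if ((i + 5 - j) %% 5 == 1)%N then y 0 j + 1
     else if ((i + 5 - j) %% 5 == 2)%N then y 0 j
     else 0).

Definition Z_Horn (X : 'M[R]_5) : Prop :=
  exists d y z : 'rV[R]_5, posvec d /\ posvec y /\ posvec z /\
    X = diag_mx d *m (HornPattern y *m diag_mx z).

Definition phi (X : 'M[R]_5) : 'M[R]_5 := X *m X^T.

End Defs.

(* Main.v *)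
Require Import Defs.
From HB Require Import structures.
From mathcomp Require Import all_boot all_order all_algebra.
From mathcomp Require Import reals.
From mathcomp Require Import boolp classical_sets topology normedtype derive.
From mathcomp Require Import ring lra zify.
Import Order.TTheory GRing.Theory Num.Theory.
Local Open Scope ring_scope.
Set Implicit Arguments. Unset Strict Implicit. Unset Printing Implicit Defensive.

Definition i0 : 'I_5 := @Ordinal 5 0 isT.
Definition i1 : 'I_5 := @Ordinal 5 1 isT.
Definition i2 : 'I_5 := @Ordinal 5 2 isT.
Definition i3 : 'I_5 := @Ordinal 5 3 isT.
Definition i4 : 'I_5 := @Ordinal 5 4 isT.

Lemma ord5P (P : 'I_5 -> Prop) : P i0 -> P i1 -> P i2 -> P i3 -> P i4 -> forall i, P i.
Proof.
move=> h0 h1 h2 h3 h4 [[|[|[|[|[|k]]]]] Hk] //.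
- by rewrite (_ : Ordinal Hk = i0) //; apply: val_inj.
- by rewrite (_ : Ordinal Hk = i1) //; apply: val_inj.
- by rewrite (_ : Ordinal Hk = i2) //; apply: val_inj.
- by rewrite (_ : Ordinal Hk = i3) //; apply: val_inj.
- by rewrite (_ : Ordinal Hk = i4) //; apply: val_inj.
Qed.

Definition nx (j : 'I_5) : 'I_5 :=
  match val j with 0 => i1 | 1 => i2 | 2 => i3 | 3 => i4 | _ => i0 end.
Definition pv (j : 'I_5) : 'I_5 :=
  match val j with 0 => i4 | 1 => i0 | 2 => i1 | 3 => i2 | _ => i3 end.

Section S.
Variable R : realType.

Lemma sum5 (f : 'I_5 -> R) : \sum_i f i = f i0 + f i1 + f i2 + f i3 + f i4.
Proof.
rewrite !big_ord_recl big_ord0 addr0 !addrA.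
by congr (_ + _ + _ + _ + _); apply: congr1; apply: val_inj.
Qed.

Definition hq (x : 'I_5 -> R) : R := \sum_i \sum_j x i * Horn R i j * x j.

Lemma hqE1 x : hq x = (x i0 - x i1 + x i2 + x i3 - x i4)^+2 + 4 * x i1 * x i3 + 4 * x i2 * (x i4 - x i3).
Proof. rewrite /hq !sum5 !mxE /=; ring. Qed.
Lemma hqE2 x : hq x = (x i0 - x i1 + x i2 - x i3 + x i4)^+2 + 4 * x i1 * x i4 + 4 * x i0 * (x i3 - x i4).
Proof. rewrite /hq !sum5 !mxE /=; ring. Qed.

Lemma hq_ge0 x : (forall i, 0 <= x i) -> 0 <= hq x.
Proof.
move=> hx; have h0 := hx i0; have h1 := hx i1; have h2 := hx i2; have h3 := hx i3; have h4 := hx i4.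
case: (lerP (x i3) (x i4)) => h.
- rewrite hqE1; have := sqr_ge0 (x i0 - x i1 + x i2 + x i3 - x i4); nra.
- rewrite hqE2; have := sqr_ge0 (x i0 - x i1 + x i2 - x i3 + x i4); nra.
Qed.

Definition incone (j : 'I_5) (x : 'I_5 -> R) : Prop :=
  x (nx (nx (nx j))) = 0 /\ x (pv j) = 0 /\ x (nx j) = x j + x (nx (nx j)).

Lemma hq_zero x : (forall i, 0 <= x i) -> hq x = 0 -> exists j, incone j x.
Proof.
move=> hx hz; have h0 := hx i0; have h1 := hx i1; have h2 := hx i2; have h3 := hx i3; have h4 := hx i4.
rewrite /incone.
case: (lerP (x i3) (x i4)) => h.
- move: hz; rewrite hqE1 => hz.
  have s := sqr_ge0 (x i0 - x i1 + x i2 + x i3 - x i4).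
  have e1 : x i1 * x i3 = 0 by nra.
  have e2 : x i2 * (x i4 - x i3) = 0 by nra.
  have e3 : (x i0 - x i1 + x i2 + x i3 - x i4)^+2 = 0 by nra.
  move/eqP: e3; rewrite sqrf_eq0 => /eqP e3.
  move/eqP: e1; rewrite mulf_eq0 => /orP[] /eqP e1;
  move/eqP: e2; rewrite mulf_eq0 => /orP[] /eqP e2.
  + by exists i3 => /=; split; [|split]; lra.
  + by exists i3 => /=; split; [|split]; lra.
  + by exists i4 => /=; split; [|split]; lra.
  + by exists i0 => /=; split; [|split]; lra.
- move: hz; rewrite hqE2 => hz.
  have s := sqr_ge0 (x i0 - x i1 + x i2 - x i3 + x i4).
  have e1 : x i1 * x i4 = 0 by nra.
  have e2 : x i0 * (x i3 - x i4) = 0 by nra.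
  have e3 : (x i0 - x i1 + x i2 - x i3 + x i4)^+2 = 0 by nra.
  move/eqP: e3; rewrite sqrf_eq0 => /eqP e3.
  move/eqP: e1; rewrite mulf_eq0 => /orP[] /eqP e1;
  move/eqP: e2; rewrite mulf_eq0 => /orP[] /eqP e2.
  + by exists i2 => /=; split; [|split]; lra.
  + by exists i2 => /=; split; [|split]; lra.
  + by exists i1 => /=; split; [|split]; lra.
  + by exists i1 => /=; split; [|split]; lra.
Qed.
End S.

Section S.
Variable R : realType.
Variables (sg ta p : 'I_5 -> R).
Hypotheses (hsg : forall j, 0 < sg j) (hta : forall j, 0 < ta j) (hp : forall j, 0 < p j)
  (hcs : forall j, p j ^+ 2 <= sg j * ta j).

Let s j := sg j + ta (pv j).
Let F j (w : R) := s j - p (pv j) ^+ 2 / w.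

Lemma F_lo j w : sg (pv j) <= w -> sg j <= F j w.
Proof.
move=> hw; rewrite /F /s.
have h1 := hsg (pv j); have h2 := hcs (pv j).
have hw0 : 0 < w := lt_le_trans h1 hw.
suff : p (pv j) ^+ 2 / w <= ta (pv j) by lra.
rewrite ler_pdivrMr //; nra.
Qed.

Lemma F_mono j w w' : sg (pv j) <= w -> w <= w' -> F j w <= F j w'.
Proof.
move=> hw hww; rewrite /F.
have hw0 : 0 < w := lt_le_trans (hsg _) hw.
have hw0' : 0 < w' := lt_le_trans hw0 hww.
suff : p (pv j) ^+ 2 / w' <= p (pv j) ^+ 2 / w by lra.
apply: ler_pM => //; first by rewrite sqr_ge0.
  by rewrite invr_ge0 ltW.
by rewrite lef_pV2 // posrE.
Qed.

Lemma F_hi j w : 0 < w -> F j w <= s j.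
Proof.
move=> hw; rewrite /F.
have : 0 <= p (pv j) ^+ 2 / w by rewrite divr_ge0 // ?sqr_ge0 ?ltW.
lra.
Qed.

Let G w := F i0 (F i4 (F i3 (F i2 (F i1 w)))).

Lemma G_lo w : sg i0 <= w -> sg i0 <= G w.
Proof.
move=> h; rewrite /G.
have a1 := F_lo (j:=i1) h; have a2 := F_lo (j:=i2) a1; have a3 := F_lo (j:=i3) a2; have a4 := F_lo (j:=i4) a3.
exact: (F_lo (j:=i0) a4).
Qed.

Lemma G_mono w w' : sg i0 <= w -> w <= w' -> G w <= G w'.
Proof.
move=> h hw; rewrite /G.
have a1 := F_lo (j:=i1) h; have b1 := F_mono (j:=i1) h hw.
have a2 := F_lo (j:=i2) a1; have b2 := F_mono (j:=i2) a1 b1.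
have a3 := F_lo (j:=i3) a2; have b3 := F_mono (j:=i3) a2 b2.
have a4 := F_lo (j:=i4) a3; have b4 := F_mono (j:=i4) a3 b3.
exact: (F_mono (j:=i0) a4 b4).
Qed.

Lemma G_hi w : sg i0 <= w -> G w <= s i0.
Proof.
move=> h; rewrite /G.
have a1 := F_lo (j:=i1) h; have a2 := F_lo (j:=i2) a1; have a3 := F_lo (j:=i3) a2; have a4 := F_lo (j:=i4) a3.
apply: F_hi; exact: lt_le_trans (hsg i4) a4.
Qed.

Lemma G_fix : exists w, sg i0 <= w /\ G w = w.
Proof.
pose E : set R := fun w => sg i0 <= w /\ w <= G w.
have E0 : E (sg i0) by split; [exact: lexx| exact: G_lo].
have Eub : ubound E (s i0).
  by move=> w [h1 h2]; apply: le_trans h2 (G_hi h1).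
have hs : has_sup E by split; [exists (sg i0) | exists (s i0)].
have hub := sup_upper_bound hs.
have lo : sg i0 <= sup E by exact: hub.
have u1 : sup E <= G (sup E).
  apply: ge_sup; first by exists (sg i0).
  move=> w hw; case: (hw) => h1 h2; apply: le_trans h2 _; apply: G_mono => //; exact: hub _ hw.
have u2 : G (sup E) <= sup E.
  apply: hub; split; first exact: G_lo.
  by apply: G_mono.
by exists (sup E); split => //; apply/eqP; rewrite eq_le u1 u2.
Qed.

Lemma fixpt : exists a c : 'I_5 -> R, (forall j, 0 < a j) /\ (forall j, 0 < c j) /\
  (forall j, a j * c j = p j) /\ (forall j, a j ^+ 2 + c (pv j) ^+ 2 = sg j + ta (pv j)).
Proof.
have [w [hw hG]] := G_fix.
pose u1 := F i1 w; pose u2 := F i2 u1; pose u3 := F i3 u2; pose u4 := F i4 u3.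
have l1 : sg i1 <= u1 by exact: F_lo.
have l2 : sg i2 <= u2 by exact: F_lo.
have l3 : sg i3 <= u3 by exact: F_lo.
have l4 : sg i4 <= u4 by exact: F_lo.
pose u := fun j : 'I_5 => match val j with 0 => w | 1 => u1 | 2 => u2 | 3 => u3 | _ => u4 end.
have ulo : forall j, sg j <= u j by apply: ord5P.
have upos : forall j, 0 < u j by move=> j; apply: lt_le_trans (hsg j) (ulo j).
have uF : forall j, u j = F j (u (pv j)) by apply: ord5P => //=; rewrite -hG.
pose a := fun j => Num.sqrt (u j).
have apos : forall j, 0 < a j by move=> j; rewrite /a sqrtr_gt0.
have a2 : forall j, a j ^+ 2 = u j by move=> j; rewrite /a sqr_sqrtr // ltW.
exists a, (fun j => p j / a j); split => //; split.
  by move=> j; rewrite divr_gt0.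
split.
  by move=> j; rewrite mulrC -mulrA mulVf ?mulr1 // gt_eqF.
move=> j; rewrite a2 expr_div_n a2 {1}uF /F /s.
by rewrite addrNK.
Qed.
End S.

Section S.
Variable R : realType.

Definition nnegm m n (B : 'M[R]_(m, n)) := forall i j, 0 <= B i j.

Lemma gramE m n (B : 'M[R]_(m, n)) i j : (B *m B^T) i j = \sum_l B i l * B j l.
Proof. by rewrite !mxE; apply: eq_bigr => l _; rewrite mxE. Qed.

Lemma pad k (B : 'M[R]_(5, k)) : (k <= 25)%N -> nnegm B ->
  exists C : 'M[R]_(5, 25), nnegm C /\ B *m B^T = C *m C^T.
Proof.
move=> hk hB.
pose C : 'M[R]_(5,25) := \matrix_(i, j) (if @insub _ (fun x => x < k)%N 'I_k (val j) is Some j' then B i j' else 0).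
exists C; split.
  by move=> i j; rewrite mxE; case: insub => // j'; exact: hB.
apply/matrixP => i m; rewrite !gramE.
pose F (x : nat) := if @insub _ (fun x => x < k)%N 'I_k x is Some j' then B i j' * B m j' else 0.
transitivity (\sum_(l < k) F l).
  by apply: eq_bigr => l _; rewrite /F valK.
rewrite (big_ord_widen _ F hk) big_mkcond /=; apply: eq_bigr => j _.
rewrite /F !mxE; case: ifP => hj.
  by case: insub => [j'|]; rewrite ?mul0r.
by rewrite insubN ?hj // mul0r.
Qed.

Lemma reduce n (B : 'M[R]_(5, n.+1)) : (25 <= n)%N -> nnegm B ->
  exists C : 'M[R]_(5, n), nnegm C /\ B *m B^T = C *m C^T.
Proof.
move=> hn hB.
pose M : 'M[R]_(n.+1, 5 * 5) := \matrix_(l, q) mxvec (\matrix_(i, m) (B i l * B m l)) 0 q.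
have hM : forall l i m, M l (mxvec_index i m) = B i l * B m l.
  by move=> l i m; rewrite /M mxE mxvecE mxE.
have hK : kermx M != 0.
  rewrite -mxrank_eq0 mxrank_ker; have h := rank_leq_col M.
  apply/eqP => h2; move: h h2 hn; set rk := \rank M; lia.
have [r hr] : exists r, row r (kermx M) != 0.
  apply/existsP; apply: contraR hK; rewrite negb_exists => /forallP h.
  apply/eqP/row_matrixP => r; rewrite row0; exact/eqP/negPn/h.
set lam := row r (kermx M) in hr.
have hlM : lam *m M = 0 by apply/sub_kermxP; exact: row_sub.
have hdep : forall i m, \sum_l lam 0 l * (B i l * B m l) = 0.
  move=> i m; have := congr1 (fun X : 'M[R]_(1, 5 * 5) => X ord0 (mxvec_index i m)) hlM.
  rewrite !mxE => h; rewrite -[RHS]h; apply: eq_bigr => l _; by rewrite hM.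
have [l1 hl1] : exists l1, lam 0 l1 != 0.
  apply/existsP; apply: contraR hr; rewrite negb_exists => /forallP h.
  apply/eqP/matrixP => a b; have := h b; rewrite negbK (ord1 a) => /eqP ->; by rewrite mxE.
pose mu := if 0 < lam 0 l1 then lam else - lam.
have hmu1 : 0 < mu 0 l1.
  rewrite /mu; case: ifP => h; first by [].
  rewrite mxE oppr_gt0; rewrite lt_neqAle hl1 /=; by rewrite leNgt h.
have hdep2 : forall i m, \sum_l mu 0 l * (B i l * B m l) = 0.
  move=> i m; rewrite /mu; case: ifP => _; first exact: hdep.
  under eq_bigr do rewrite mxE mulNr.
  by rewrite sumrN hdep oppr0.
case: (@arg_maxP _ _ _ l1 predT (fun l => mu 0 l) isT) => l0 _ hl0.
have hl0p : 0 < mu 0 l0 by apply: lt_le_trans hmu1 (hl0 l1 isT).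
pose w l := 1 - mu 0 l / mu 0 l0.
have hw : forall l, 0 <= w l.
  move=> l; rewrite /w subr_ge0 ler_pdivrMr // mul1r; exact: hl0.
have hw0 : w l0 = 0 by rewrite /w divff ?subrr // gt_eqF.
have hsum : forall i m, \sum_l B i l * B m l = \sum_l w l * (B i l * B m l).
  move=> i m; rewrite /w.
  under [in RHS]eq_bigr do rewrite mulrBl mul1r.
  rewrite sumrB.
  have -> : \sum_l mu 0 l / mu 0 l0 * (B i l * B m l) = 0.
    transitivity ((mu 0 l0)^-1 * \sum_l mu 0 l * (B i l * B m l)); last by rewrite hdep2 mulr0.
    rewrite mulr_sumr; apply: eq_bigr => l _; ring.
  by rewrite subr0.
pose C : 'M[R]_(5, n) := \matrix_(i, l) (Num.sqrt (w (lift l0 l)) * B i (lift l0 l)).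
exists C; split.
  by move=> i l; rewrite mxE mulr_ge0 ?sqrtr_ge0 ?hB.
apply/matrixP => i m; rewrite !gramE hsum (bigD1_ord l0) //= hw0 mul0r add0r.
apply: eq_bigr => l _; rewrite !mxE.
rewrite mulrACA -expr2 sqr_sqrtr //.
Qed.

Lemma carath k (B : 'M[R]_(5, k)) : nnegm B ->
  exists C : 'M[R]_(5, 25), nnegm C /\ B *m B^T = C *m C^T.
Proof.
elim: k B => [|n IH] B hB; first exact: pad.
case: (leqP n.+1 25) => hn; first exact: pad.
have [C [hC ->]] := reduce (hn : (25 <= n)%N) hB.
exact: IH.
Qed.
End S.

Section S.
Variable R : realType.

Definition U (j i : 'I_5) : R := ((i == j) || (i == nx j))%:R.

Lemma cone_dec j (x : 'I_5 -> R) : incone j x -> forall i, x i = x j * U j i + x (nx (nx j)) * U (nx j) i.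
Proof.
move: j; apply: ord5P => -[h1 [h2 h3]]; apply: ord5P; rewrite /U /=; lra.
Qed.

Lemma hq_cone j (al ga : R) : hq (fun i => al * U j i + ga * U (nx j) i) = 0.
Proof. move: j; apply: ord5P; rewrite /hq !sum5 !mxE /U /=; ring. Qed.

Definition Gm (sg p ta : 'I_5 -> R) (i l : 'I_5) : R :=
  \sum_j (sg j * (U j i * U j l) + p j * (U j i * U (nx j) l + U (nx j) i * U j l)
          + ta j * (U (nx j) i * U (nx j) l)).

Lemma Gm_eq sg p ta sg' ta' : (forall j, sg j + ta (pv j) = sg' j + ta' (pv j)) ->
  forall i l, Gm sg p ta i l = Gm sg' p ta' i l.
Proof.
move=> h; have h0 := h i0; have h1 := h i1; have h2 := h i2; have h3 := h i3; have h4 := h i4.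
rewrite /= in h0 h1 h2 h3 h4.
apply: ord5P; apply: ord5P; rewrite /Gm !sum5 /U /=; lra.
Qed.

Lemma Gm_p sg p ta j : Gm sg p ta j (nx (nx j)) = p j.
Proof. move: j; apply: ord5P; rewrite /Gm !sum5 /U /=; ring. Qed.

Lemma frobE (X Y : 'M[R]_5) : frob X Y = \sum_i \sum_j X i j * Y i j.
Proof.
rewrite /frob /mxtrace exchange_big; apply: eq_bigr => i _; rewrite !mxE.
by apply: eq_bigr => j _; rewrite mxE.
Qed.

Lemma DHDE (d : 'rV[R]_5) i j : (diag_mx d *m Horn R *m diag_mx d) i j = d 0 i * Horn R i j * d 0 j.
Proof. by rewrite mul_mx_diag mul_diag_mx !mxE. Qed.

Lemma frob_gram k (Bm : 'M[R]_(5, k)) (d : 'rV[R]_5) :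
  frob (Bm *m Bm^T) (diag_mx d *m Horn R *m diag_mx d) = \sum_l hq (fun i => d 0 i * Bm i l).
Proof.
rewrite frobE.
transitivity (\sum_i \sum_j \sum_l (d 0 i * Bm i l) * Horn R i j * (d 0 j * Bm j l)).
  apply: eq_bigr => i _; apply: eq_bigr => j _; rewrite DHDE gramE mulr_suml.
  apply: eq_bigr => l _; ring.
under eq_bigr => i _ do rewrite exchange_big.
by rewrite exchange_big.
Qed.

Lemma Hp_col (y z : 'rV[R]_5) i j :
  HornPattern y i j * z 0 j = z 0 j * U j i + y 0 j * z 0 j * U (nx j) i.
Proof. move: i j; apply: ord5P; apply: ord5P; rewrite /U mxE /=; ring. Qed.

End S.

Section S2.
Variable R : realType.

Lemma Gm_ext (sg p ta sg' p' ta' : 'I_5 -> R) :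
  (forall j, sg j + ta (pv j) = sg' j + ta' (pv j)) -> (forall j, p j = p' j) ->
  forall i l, Gm sg p ta i l = Gm sg' p' ta' i l.
Proof.
move=> h hp i l; rewrite (Gm_eq p h) /Gm; apply: eq_bigr => j _; by rewrite hp.
Qed.

Lemma CS (I : finType) (P : pred I) (f g : I -> R) :
  (\sum_(i | P i) f i * g i) ^+ 2 <= (\sum_(i | P i) f i ^+ 2) * (\sum_(i | P i) g i ^+ 2).
Proof.
set Sfg := \sum_(i | P i) f i * g i; set Sf := \sum_(i | P i) f i ^+ 2; set Sg := \sum_(i | P i) g i ^+ 2.
have key : forall a b, \sum_(i | P i) (a * f i - b * g i) ^+ 2 = a ^+ 2 * Sf - 2 * a * b * Sfg + b ^+ 2 * Sg.
  move=> a b; rewrite /Sf /Sfg /Sg !mulr_sumr -sumrB -big_split; apply: eq_bigr => i _ /=; ring.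
have hSg : 0 <= Sg by apply: sumr_ge0 => i _; exact: sqr_ge0.
have := key Sg Sfg.
have h0 : 0 <= \sum_(i | P i) (Sg * f i - Sfg * g i) ^+ 2 by apply: sumr_ge0 => i _; exact: sqr_ge0.
move=> e; rewrite e in h0.
case: (ltrP 0 Sg) => hg.
  have : 0 <= Sg * (Sf * Sg - Sfg ^+ 2) by move: h0; rewrite expr2; nra.
  rewrite pmulr_rge0 //; lra.
have Sg0 : Sg = 0 by apply/eqP; rewrite eq_le hg hSg.
have g0 : forall i, P i -> g i = 0.
  move=> i hi; apply/eqP; rewrite -sqrf_eq0; apply/eqP.
  by move: i hi; apply: psumr_eq0P => // i _; exact: sqr_ge0.
have -> : Sfg = 0 by rewrite /Sfg big1 // => i hi; rewrite g0 // mulr0.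
by rewrite Sg0 expr0n /= mulr0.
Qed.

Lemma zhorn_W (X : 'M[R]_5) : Z_Horn X -> W X.
Proof.
move=> [d [y [z [hd [hy [hz ->]]]]]].
have E : forall i j, (diag_mx d *m (HornPattern y *m diag_mx z)) i j = d 0 i * (HornPattern y i j * z 0 j).
  by move=> i j; rewrite mul_diag_mx mul_mx_diag !mxE.
split.
  move=> i j; rewrite E; apply: mulr_ge0; first exact: ltW.
  apply: mulr_ge0; last exact: ltW.
  have := hy j; rewrite mxE; case: ifP => _; first by move=> _; exact: ler01.
  case: ifP => _; first by move=> h; apply: addr_ge0 => //; exact: ltW.
  case: ifP => _ // h; exact: ltW.
move=> i j hij; rewrite E mxE.
have h0 : ((i + 5 - j) %% 5 == 0)%N = false by apply/negbTE; rewrite -lt0n; apply: leq_ltn_trans hij.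
have h1 : ((i + 5 - j) %% 5 == 1)%N = false by apply/negbTE; move: hij; case: ((i + 5 - j) %% 5)%N => [|[|]].
have h2 : ((i + 5 - j) %% 5 == 2)%N = false by apply/negbTE; move: hij; case: ((i + 5 - j) %% 5)%N => [|[|[|]]].
by rewrite h0 h1 h2 mul0r mulr0.
Qed.

End S2.

Module CPclosed.

Section S.
Import numFieldTopology.Exports numFieldNormedType.Exports.
Local Open Scope classical_set_scope.
Variable R : realType.

Lemma cont_sum (T : topologicalType) n (g : 'I_n -> T -> R) :
  (forall i, continuous (g i)) -> continuous (fun x => \sum_(i < n) g i x).
Proof.
elim: n g => [|n IH] g hg.
  rewrite (_ : (fun x => _) = fun=> 0); first exact: cst_continuous.
  by apply: funext => x; rewrite big_ord0.
rewrite (_ : (fun x => _) = (fun x => \sum_(i < n) g (widen_ord (leqnSn n) i) x + g ord_max x)).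
  move=> x; exact: (continuousD (IH (fun i => g (widen_ord (leqnSn n) i)) (fun i => hg _) x) (hg ord_max x)).
by apply: funext => x; rewrite big_ord_recr.
Qed.

Definition Cv (v : 'rV[R]_(5 * 25)) : 'M[R]_(5, 25) := \matrix_(i, l) v ord0 (mxvec_index i l).

Definition fobj (A : 'M[R]_5) (v : 'rV[R]_(5 * 25)) : R :=
  \sum_i \sum_m `|\sum_l v ord0 (mxvec_index i l) * v ord0 (mxvec_index m l) - A i m|.

Lemma fobj_cont A : continuous (fobj A).
Proof.
apply: cont_sum => i; apply: cont_sum => m.
have hin : continuous (fun v : 'rV[R]_(5 * 25) => \sum_l v ord0 (mxvec_index i l) * v ord0 (mxvec_index m l) - A i m).
  move=> x; apply: continuousB; last exact: cst_continuous.
  apply: cont_sum => l {}x; apply: continuousM; exact: coord_continuous.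
move=> x; exact: (continuous_comp (hin x) (@norm_continuous _ R^o _)).
Qed.

Lemma one_le_sum n (F : 'I_n -> R) j : (forall i, 0 <= F i) -> F j <= \sum_i F i.
Proof. move=> h; rewrite (bigD1 j) //= lerDl sumr_ge0 // => i _; exact: h. Qed.

Lemma approx A : sym_closure (@CP5 R) A -> forall e, 0 < e -> e <= 1 ->
  exists v : 'rV[R]_(5 * 25), (forall q, 0 <= v ord0 q <= 2 + \sum_i `|A i i|) /\ fobj A v <= 25 * e.
Proof.
move=> [hsym hcl] e he he1.
have [B [hBs [[k [Bm [hBm hBdef]]] hclose]]] := hcl e he.
have [C [hC hCdef]] := carath hBm.
exists (mxvec C); split.
  move=> q; case/mxvec_indexP: q => i l; rewrite mxvecE hC /=.
  have h1 : C i l ^+ 2 <= B i i.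
    rewrite hBdef hCdef gramE expr2; apply: one_le_sum => l'.
    by rewrite mulr_ge0.
  have h2 := hclose i i.
  have h3 : A i i <= `|A i i| by rewrite ler_norm.
  have h4 : `|A i i| <= \sum_i `|A i i| by apply: (@one_le_sum _ (fun i => `|A i i|)) => i'.
  have h5 : B i i - A i i <= e by apply: le_trans (ler_norm _) (ltW h2).
  have h6 := hC i l.
  nra.
have -> : 25 * e = \sum_(i < 5) \sum_(m < 5) e.
  by rewrite !sumr_const !card_ord -mulrnA -[RHS]mulr_natl.
apply: ler_sum => i _; apply: ler_sum => m _.
have := hclose i m; rewrite hBdef hCdef gramE => h.
apply: ltW; apply: le_lt_trans h; rewrite le_eqVlt; apply/orP; left; apply/eqP.
congr (`|_ - _|); apply: eq_bigr => l _; by rewrite !mxvecE.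
Qed.

Lemma cp_closed A : sym_closure (@CP5 R) A -> CP5 A.
Proof.
move=> hA.
pose Mb := 2 + \sum_i `|A i i|.
pose K : set 'rV[R]_(5 * 25) := fun v => forall q, `[0, Mb]%classic (v ord0 q).
have cK : compact K.
  by apply: (@rV_compact _ _ (fun=> `[0, Mb]%classic)) => _; apply: segment_compact.
have K0 : K !=set0.
  exists 0 => q /=; rewrite mxE in_itv /= lexx /Mb; apply: addr_ge0 => //.
  by apply: sumr_ge0 => i _.
have [c cK' hc] := EVT_min_rV K0 cK (continuous_subspaceT (@fobj_cont A)).
have fc0 : fobj A c <= 0.
  apply/negPn/negP; rewrite -ltNge => hpos.
  pose e := Num.min 1 (fobj A c / 50).
  have he : 0 < e by rewrite lt_min ltr01 divr_gt0.
  have he1 : e <= 1 by rewrite ge_min lexx.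
  have he2 : e <= fobj A c / 50 by rewrite ge_min lexx orbT.
  have [v [hv hfv]] := approx hA he he1.
  have vK : v \in K.
    rewrite inE => q; have := hv q; rewrite /= in_itv /=; by [].
  have := hc v vK; lra.
have fce : fobj A c = 0.
  apply/eqP; rewrite eq_le fc0 /= /fobj; apply: sumr_ge0 => i _; apply: sumr_ge0 => m _.
  exact: normr_ge0.
have cK2 : K c by move: cK'; rewrite inE.
exists 25, (Cv c); split.
  move=> i l; rewrite mxE; have := cK2 (mxvec_index i l); rewrite /= in_itv /=.
  by case/andP.
apply/matrixP => i m; rewrite gramE.
have : `|\sum_l c ord0 (mxvec_index i l) * c ord0 (mxvec_index m l) - A i m| = 0.
  move/eqP: fce; rewrite /fobj psumr_eq0 => [/allP h|i' _]; last first.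
    by apply: sumr_ge0 => m' _.
  have := h i (mem_index_enum _); rewrite psumr_eq0 => [/allP h'|]; last by [].
  exact/eqP/(h' m (mem_index_enum _)).
move/eqP; rewrite normr_eq0 subr_eq0 => /eqP <-.
by apply: eq_bigr => l _; rewrite !mxE.
Qed.

End S.

End CPclosed.
Import CPclosed.

Section S.
Variable R : realType.

Definition inconeb (j : 'I_5) (x : 'I_5 -> R) : bool :=
  [&& x (nx (nx (nx j))) == 0, x (pv j) == 0 & x (nx j) == x j + x (nx (nx j))].

Lemma inconebP j x : incone j x -> inconeb j x.
Proof. by move=> [h1 [h2 h3]]; rewrite /inconeb h1 h2 h3 !eqxx. Qed.

Lemma inconebP' j x : inconeb j x -> incone j x.
Proof. by case/and3P => /eqP h1 /eqP h2 /eqP h3. Qed.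

Lemma forward (A : 'M[R]_5) : V_Horn A -> exists X, W X /\ Z_Horn X /\ A = phi X.
Proof.
move=> [[hcl hnint] [[hsym [e [he hint]]] [d [hd hfrob]]]].
have [k [Bm [hBm hA]]] := cp_closed hcl.
have Asym : forall i j, A j i = A i j.
  by move=> i j; have := congr1 (fun M : 'M[R]_5 => M i j) hsym; rewrite mxE.
have Apos : forall i j, 0 < A i j.
  pose B := A - const_mx (e / 2).
  have : DNN5 B.
    apply: hint.
      by apply/matrixP => i j; rewrite !mxE Asym.
    move=> i j; rewrite !mxE addrAC subrr add0r normrN ger0_norm; lra.
  move=> [_ hnn] i j; have := hnn i j; rewrite !mxE; lra.
pose x l := fun i => d 0 i * Bm i l.
have xnn : forall l i, 0 <= x l i by move=> l i; rewrite /x mulr_ge0 // ltW.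
have hq0 : forall l, hq (x l) = 0.
  move: hfrob; rewrite hA frob_gram => h l.
  exact: (@psumr_eq0P _ _ predT (fun l => hq (x l)) (fun l' _ => hq_ge0 (xnn l')) h l isT).
pose cidx l := odflt i0 [pick j | inconeb j (x l)].
have hc : forall l, incone (cidx l) (x l).
  move=> l; rewrite /cidx; case: pickP => [j hj|h] /=; first exact: inconebP'.
  have [j hj] := hq_zero (xnn l) (hq0 l).
  by have := h j; rewrite inconebP.
pose sg j := \sum_(l | cidx l == j) x l j ^+ 2.
pose ta j := \sum_(l | cidx l == j) x l (nx (nx j)) ^+ 2.
pose p j := \sum_(l | cidx l == j) x l j * x l (nx (nx j)).
have gram : forall i m, d 0 i * A i m * d 0 m = Gm sg p ta i m.
  move=> i m; rewrite hA gramE mulr_sumr mulr_suml.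
  transitivity (\sum_l x l i * x l m).
    by apply: eq_bigr => l _; rewrite /x; ring.
  rewrite (partition_big cidx predT) //=; apply: eq_bigr => j _.
  rewrite /sg /p /ta !mulr_suml -!big_split /=; apply: eq_bigr => l /eqP hl.
  rewrite (cone_dec (hc l) i) (cone_dec (hc l) m) hl; ring.
have ppos : forall j, 0 < p j.
  move=> j; rewrite -(Gm_p sg p ta j) -gram.
  by rewrite mulr_gt0 // mulr_gt0.
have sgnn : forall j, 0 <= sg j by move=> j; apply: sumr_ge0 => l _; exact: sqr_ge0.
have tann : forall j, 0 <= ta j by move=> j; apply: sumr_ge0 => l _; exact: sqr_ge0.
have hcs : forall j, p j ^+ 2 <= sg j * ta j by move=> j; exact: CS.
have sgpos : forall j, 0 < sg j.
  move=> j; have := hcs j; have := ppos j; have := sgnn j; have := tann j.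
  move=> h1 h2 h3 h4; rewrite lt_neqAle h2 andbT; apply/eqP => h5.
  rewrite -h5 mul0r in h4; nra.
have tapos : forall j, 0 < ta j.
  move=> j; have := hcs j; have := ppos j; have := sgnn j; have := tann j.
  move=> h1 h2 h3 h4; rewrite lt_neqAle h1 andbT; apply/eqP => h5.
  rewrite -h5 mulr0 in h4; nra.
have [a [c [apos [cpos [hac hsq]]]]] := fixpt sgpos ppos hcs.
pose dinv : 'rV[R]_5 := \row_i (d 0 i)^-1.
pose y : 'rV[R]_5 := \row_j (c j / a j).
pose z : 'rV[R]_5 := \row_j a j.
have ZX : Z_Horn (diag_mx dinv *m (HornPattern y *m diag_mx z)).
  exists dinv, y, z; split; first by move=> i; rewrite mxE invr_gt0.
  split; first by move=> i; rewrite mxE divr_gt0.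
  by split => // i; rewrite mxE.
exists (diag_mx dinv *m (HornPattern y *m diag_mx z)); split; first exact: zhorn_W.
split => //.
apply/matrixP => i m; rewrite /phi gramE.
have E : forall i j, (diag_mx dinv *m (HornPattern y *m diag_mx z)) i j =
    (d 0 i)^-1 * (a j * U R j i + c j * U R (nx j) i).
  move=> i' j.
  have E0 : (diag_mx dinv *m (HornPattern y *m diag_mx z)) i' j = dinv 0 i' * (HornPattern y i' j * z 0 j).
    by rewrite mul_diag_mx mul_mx_diag !mxE.
  rewrite E0 Hp_col !mxE; congr (_ * (_ + _ * _)).
  by rewrite divfK // gt_eqF.
transitivity ((d 0 i)^-1 * (d 0 m)^-1 * Gm (fun j => a j ^+ 2) (fun j => a j * c j) (fun j => c j ^+ 2) i m); last first.
  rewrite /Gm mulr_sumr; apply: eq_bigr => j _; rewrite !E; ring.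
have GE := @Gm_ext R sg p ta (fun j => a j ^+ 2) (fun j => a j * c j) (fun j => c j ^+ 2)
  (fun j => esym (hsq j)) (fun j => esym (hac j)) i m.
rewrite -GE -gram; have := hd i; have := hd m; move=> h1 h2.
field; by rewrite !gt_eqF.
Qed.

End S.

Section S.
Variable R : realType.

Lemma one_le_sum' n (F : 'I_n -> R) j : (forall i, 0 <= F i) -> F j <= \sum_i F i.
Proof. move=> h; rewrite (bigD1 j) //= lerDl sumr_ge0 // => i _; exact: h. Qed.

Lemma qfE (B : 'M[R]_5) (x : 'cV[R]_5) : (x^T *m B *m x) 0 0 = \sum_i \sum_l x i 0 * B i l * x l 0.
Proof.
rewrite mxE exchange_big; apply: eq_bigr => l _; rewrite mxE mulr_suml.
by apply: eq_bigr => i _; rewrite mxE.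
Qed.

Lemma hq_ext (x x' : 'I_5 -> R) : (forall i, x i = x' i) -> hq x = hq x'.
Proof. by move=> h; rewrite /hq; apply: eq_bigr => i _; apply: eq_bigr => j _; rewrite !h. Qed.

Lemma Horn_sym i j : Horn R i j = Horn R j i.
Proof. by move: i j; apply: ord5P; apply: ord5P; rewrite !mxE. Qed.

Lemma cyc (w0 w1 w2 w3 w4 y0 y1 y2 y3 y4 : R) : 0 < y0 -> 0 < y1 -> 0 < y2 -> 0 < y3 -> 0 < y4 ->
  w0 = -(y0 * w1) -> w1 = -(y1 * w2) -> w2 = -(y2 * w3) -> w3 = -(y3 * w4) -> w4 = -(y4 * w0) -> w0 = 0.
Proof.
move=> p0 p1 p2 p3 p4 h0 h1 h2 h3 h4.
have : w0 * (1 + y0 * y1 * y2 * y3 * y4) = 0.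
  rewrite mulrDr mulr1 {1}h0 h1 h2 h3 h4; ring.
move/eqP; rewrite mulf_eq0 => /orP[/eqP //|].
have : 0 < 1 + y0 * y1 * y2 * y3 * y4 by rewrite ltr_pwDr // !mulr_gt0.
by move=> h /eqP h'; rewrite h' ltxx in h.
Qed.

Lemma Hp_inj (y : 'rV[R]_5) : posvec y -> forall v : 'rV[R]_5, v *m HornPattern y = 0 -> v = 0.
Proof.
move=> hy v hv.
have e : forall j, (v *m HornPattern y) 0 j = 0 by move=> j; rewrite hv mxE.
have e0 := e i0; have e1 := e i1; have e2 := e i2; have e3 := e i3; have e4 := e i4.
rewrite !mxE !sum5 !mxE /= in e0 e1 e2 e3 e4.
have q0 := hy i0; have q1 := hy i1; have q2 := hy i2; have q3 := hy i3; have q4 := hy i4.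
have w0 : v 0 i0 + v 0 i1 = 0.
  apply: (cyc (w1 := v 0 i1 + v 0 i2) (w2 := v 0 i2 + v 0 i3) (w3 := v 0 i3 + v 0 i4) (w4 := v 0 i4 + v 0 i0) q0 q1 q2 q3 q4); lra.
have w4 : v 0 i4 + v 0 i0 = 0 by nra.
have w3 : v 0 i3 + v 0 i4 = 0 by nra.
have w2 : v 0 i2 + v 0 i3 = 0 by nra.
have w1 : v 0 i1 + v 0 i2 = 0 by nra.
apply/matrixP => a b; rewrite (ord1 a) mxE; move: b; apply: ord5P; lra.
Qed.

Lemma diag_unit (d : 'rV[R]_5) : posvec d -> diag_mx d \in unitmx.
Proof.
move=> hd; rewrite unitmxE det_diag unitfE; apply: lt0r_neq0.
by apply: prodr_gt0 => i _; exact: hd.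
Qed.

Lemma Hp_unit (y : 'rV[R]_5) : posvec y -> HornPattern y \in unitmx.
Proof.
move=> hy; rewrite -row_free_unit -kermx_eq0; apply/eqP/row_matrixP => r.
rewrite row0; apply: (Hp_inj hy); apply/sub_kermxP; exact: row_sub.
Qed.

Lemma sq_sum5 (a : 'I_5 -> R) : (\sum_i `|a i|) ^+ 2 <= 5 * \sum_i a i ^+ 2.
Proof.
rewrite !sum5 -!(real_normK (num_real (a _))).
set b0 := `|a i0|; set b1 := `|a i1|; set b2 := `|a i2|; set b3 := `|a i3|; set b4 := `|a i4|.
have := sqr_ge0 (b0 - b1); have := sqr_ge0 (b0 - b2); have := sqr_ge0 (b0 - b3); have := sqr_ge0 (b0 - b4);
have := sqr_ge0 (b1 - b2); have := sqr_ge0 (b1 - b3); have := sqr_ge0 (b1 - b4);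
have := sqr_ge0 (b2 - b3); have := sqr_ge0 (b2 - b4); have := sqr_ge0 (b3 - b4).
nra.
Qed.

Lemma Hp_pos (y : 'rV[R]_5) : posvec y -> forall i j : 'I_5, ((i + 5 - j) %% 5 <= 2)%N -> 0 < HornPattern y i j.
Proof.
move=> hy i j; rewrite mxE; set k := ((i + 5 - j) %% 5)%N => hk.
have := hy j; case: ifP => h0; first by move=> _; exact: ltr01.
case: ifP => h1; first by move=> h; apply: addr_gt0.
case: ifP => h2 // _; exfalso; move: hk h0 h1 h2; case: k => [|[|[|]]] //.
Qed.

Lemma backward (X : 'M[R]_5) : W X -> Z_Horn X -> V_Horn (phi X).
Proof.
move=> hW hZ; have [d [y [z [hd [hy [hz hX]]]]]] := hZ.
set A := phi X.
have Xnn := hW.1.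
have Asym : A^T = A by rewrite /A /phi trmx_mul trmxK.
have Asym' : forall i j, A j i = A i j.
  by move=> i j; have := congr1 (fun M : 'M[R]_5 => M i j) Asym; rewrite mxE.
pose dinv : 'rV[R]_5 := \row_i (d 0 i)^-1.
have hdinv : posvec dinv by move=> i; rewrite mxE invr_gt0.
pose K := diag_mx dinv *m Horn R *m diag_mx dinv.
have XE0 : forall i k, X i k = d 0 i * (HornPattern y i k * z 0 k).
  by move=> i k; rewrite hX mul_diag_mx mul_mx_diag !mxE.
have XE : forall i k, dinv 0 i * X i k = z 0 k * U R k i + y 0 k * z 0 k * U R (nx k) i.
  move=> i k; rewrite XE0 Hp_col mxE mulrA mulVf ?mul1r //; exact: lt0r_neq0.
have frob0 : frob A K = 0.
  rewrite /A /phi /K frob_gram; apply: big1 => k _.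
  rewrite -(hq_cone k (z 0 k) (y 0 k * z 0 k)); apply: hq_ext => i; exact: XE.
have Ksym : forall i j, K j i = K i j.
  by move=> i j; rewrite /K !DHDE Horn_sym; ring.
split; last first.
  split; last by exists dinv.
  have Apos : forall i l, 0 < A i l.
    have H : forall i l : 'I_5, ((i + 5 - (if ((l + 5 - i) %% 5 <= 2)%N then i else l)) %% 5 <= 2)%N &&
        ((l + 5 - (if ((l + 5 - i) %% 5 <= 2)%N then i else l)) %% 5 <= 2)%N.
      by apply: ord5P; apply: ord5P.
    move=> i l; have /andP [hj1 hj2] := H i l; set j := (if _ then i else l) in hj1 hj2.
    rewrite /A /phi gramE.
    apply: (lt_le_trans _ (@one_le_sum' _ (fun j => X i j * X l j) j _)); last first.
      by move=> j'; rewrite mulr_ge0.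
    rewrite /= !XE0 !mulr_gt0 //; exact: Hp_pos.
  have [mA [hmA hmAle]] : exists mA, 0 < mA /\ forall i l, mA <= A i l.
    case: (@arg_minP _ _ _ (i0, i0) predT (fun q : 'I_5 * 'I_5 => A q.1 q.2) isT) => q _ hq.
    exists (A q.1 q.2); split; first exact: Apos.
    by move=> i l; exact: (hq (i, l) isT).
  have Xunit : X \in unitmx.
    rewrite hX !unitmx_mul diag_unit // Hp_unit //= diag_unit //.
  pose Y := invmx X^T.
  have hY : Y *m X^T = 1%:M by apply: mulVmx; rewrite unitmx_tr.
  pose MY := \sum_i \sum_j `|Y i j|.
  have MYge : forall i j, `|Y i j| <= MY.
    move=> i j; apply: (le_trans _ (@one_le_sum' _ (fun i => \sum_j `|Y i j|) i _)); last first.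
      by move=> i'; rewrite sumr_ge0.
    by apply: (@one_le_sum' _ (fun j => `|Y i j|) j) => j'.
  have MY0 : 0 <= MY by rewrite sumr_ge0 // => i _; rewrite sumr_ge0.
  pose eps := Num.min mA (1 / (125 * MY ^+ 2 + 1)).
  have hden : 0 < 125 * MY ^+ 2 + 1 by rewrite ltr_pwDr // mulr_ge0 // sqr_ge0.
  have heps : 0 < eps by rewrite lt_min hmA divr_gt0.
  have heps1 : eps <= mA by rewrite ge_min lexx.
  have heps2 : eps * (125 * MY ^+ 2 + 1) <= 1.
    rewrite -ler_pdivlMr // mul1r; by rewrite ge_min div1r lexx orbT.
  split; first exact: Asym.
  exists eps; split => //.
  move=> B hBs hclose; split; last first.
    move=> i j; have := hclose i j; have := hmAle i j; rewrite ltr_norml; lra.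
  split => // x; rewrite qfE.
  pose w j := \sum_i x i 0 * X i j.
  pose Q := \sum_j w j ^+ 2.
  pose Sx := \sum_i `|x i 0|.
  have hQ : \sum_i \sum_l x i 0 * A i l * x l 0 = Q.
    rewrite /Q /w.
    transitivity (\sum_j \sum_i \sum_l x i 0 * X i j * (x l 0 * X l j)); last first.
      by apply: eq_bigr => j _; rewrite expr2 mulr_suml; apply: eq_bigr => i _; rewrite mulr_sumr.
    rewrite [RHS]exchange_big; apply: eq_bigr => i _; rewrite [RHS]exchange_big; apply: eq_bigr => l _.
    rewrite /A /phi gramE mulr_sumr mulr_suml; apply: eq_bigr => j _; ring.
  have hQ0 : 0 <= Q by rewrite sumr_ge0 // => j _; rewrite sqr_ge0.
  have hB : Q - eps * Sx ^+ 2 <= \sum_i \sum_l x i 0 * B i l * x l 0.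
    have -> : \sum_i \sum_l x i 0 * B i l * x l 0 =
        Q + \sum_i \sum_l x i 0 * (B i l - A i l) * x l 0.
      rewrite -hQ -big_split; apply: eq_bigr => i _; rewrite -big_split; apply: eq_bigr => l _ /=; ring.
    rewrite lerD2l expr2 mulr_suml mulr_sumr -sumrN; apply: ler_sum => i _.
    rewrite mulr_sumr mulr_sumr -sumrN; apply: ler_sum => l _.
    have h1 := hclose i l.
    have h2 : `|x i 0 * (B i l - A i l) * x l 0| <= eps * (`|x i 0| * `|x l 0|).
      rewrite !normrM mulrAC mulrC; apply: ler_wpM2r; [by rewrite mulr_ge0 | exact: ltW].
    rewrite -lerNl; apply: le_trans h2; rewrite -normrN; exact: ler_norm.
  have hx : forall i, x i 0 = \sum_j Y i j * w j.
    move=> i; have := congr1 (fun M : 'cV[R]_5 => M i 0) (mulmxA Y X^T x).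
    rewrite hY mul1mx => <-; rewrite mxE; apply: eq_bigr => j _; rewrite mxE /w.
    congr (_ * _); apply: eq_bigr => i' _; rewrite mxE mulrC.
    by [].
  pose T := \sum_j `|w j|.
  have hxi : forall i, `|x i 0| <= MY * T.
    move=> i; rewrite hx /T mulr_sumr; apply: le_trans (ler_norm_sum _ _ _) _.
    apply: ler_sum => j _; rewrite normrM; apply: ler_wpM2r => //; exact: MYge.
  have hSx : Sx <= 5 * (MY * T).
    rewrite /Sx; apply: le_trans (ler_sum _ (fun i _ => hxi i)) _.
    by rewrite sumr_const card_ord mulr_natl.
  have hT : T ^+ 2 <= 5 * Q by exact: sq_sum5.
  have hT0 : 0 <= T by rewrite sumr_ge0.
  have hSx0 : 0 <= Sx by rewrite sumr_ge0.
  have hS2 : Sx ^+ 2 <= 125 * MY ^+ 2 * Q.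
    have : Sx ^+ 2 <= (5 * (MY * T)) ^+ 2 by rewrite ler_sqr // ?nnegrE // mulr_ge0 // mulr_ge0.
    move=> h; apply: le_trans h _; rewrite !exprMn.
    have : 0 <= MY ^+ 2 by rewrite sqr_ge0.
    nra.
  apply: le_trans hB; nra.
split.
  split; first exact: Asym.
  move=> e he; exists A; split; first exact: Asym.
  split; first by exists 5%N, X.
  by move=> i j; rewrite subrr normr0.
move=> [_ [e [he hint]]].
pose S := 1 + \sum_i \sum_j `|K i j|.
have hS : 0 < S by rewrite /S ltr_pwDl // sumr_ge0 // => i _; rewrite sumr_ge0.
pose t := e / S.
have ht : 0 < t by rewrite divr_gt0.
pose B := A - t *: K.
have BE : forall i j, B i j = A i j - t * K i j.
  have G : forall (A0 K0 : 'M[R]_5) i j, (A0 - t *: K0) i j = A0 i j - t * K0 i j.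
    by move=> A0 K0 i j; rewrite !mxE.
  by move=> i j; rewrite /B G.
have : CP5 B.
  apply: hint.
    by apply/matrixP => i j; rewrite mxE !BE Asym' Ksym.
  move=> i j; rewrite BE addrAC subrr add0r normrN normrM (gtr0_norm ht).
  have h1 : `|K i j| <= \sum_i \sum_j `|K i j|.
    apply: (le_trans _ (@one_le_sum' _ (fun i => \sum_j `|K i j|) i _)); last by move=> i'; rewrite sumr_ge0.
    by apply: (@one_le_sum' _ (fun j => `|K i j|) j) => j'.
  have : t * S = e by rewrite /t divfK // lt0r_neq0.
  rewrite /S in h1 *; nra.
move=> [k [C [hC hB]]].
have ge0 : 0 <= frob B K.
  rewrite hB /K frob_gram; apply: sumr_ge0 => l _; apply: hq_ge0 => i.
  by rewrite mulr_ge0 // ltW.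
have eq : frob B K = frob A K - t * frob K K.
  rewrite !frobE mulr_sumr -sumrB; apply: eq_bigr => i _.
  rewrite mulr_sumr -sumrB; apply: eq_bigr => j _; rewrite BE; ring.
have pos : 0 < frob K K.
  rewrite frobE; apply: (lt_le_trans _ (@one_le_sum' _ (fun i => \sum_j K i j * K i j) i0 _)); last first.
    by move=> i; apply: sumr_ge0 => j _; rewrite -expr2 sqr_ge0.
  apply: (lt_le_trans _ (@one_le_sum' _ (fun j => K i0 j * K i0 j) i0 _)); last first.
    by move=> j; rewrite -expr2 sqr_ge0.
  rewrite /K DHDE !mxE /=.
  have := hdinv i0; rewrite mxE => h; rewrite !mulr_gt0 //.
move: ge0; rewrite eq frob0; nra.
Qed.

End S.


Theorem theorem2p6 (R : realType) (A : 'M[R]_5) :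
  V_Horn A <-> exists X : 'M[R]_5, W X /\ Z_Horn X /\ A = phi X.
Proof.
split; first exact: forward.
by move=> [X [hW [hZ ->]]]; exact: backward hW hZ.
Qed.
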